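(* Let $\Theta$, $\mathtt{info}_K$, $\mathtt{good}_K$ and $\mathtt{max}_K$ (for $K\subseteq I$) be as in the context. For every model $\mathcal{M}=\langle W,V\rangle$, $w\in W$ and $X\subseteq W$: (1) for every $L\subseteq I$, if $\mathcal{M},w,X\vDash\mathtt{good}_L$ then $\llbracket\mathtt{info}_L\rrbracket^{\mathcal{M},X}$ is a $\Theta$-subset of $X$; (2) if $Y$ is a maximal $\Theta$-subset of $X$, then there is $K\subseteq I$ such that $Y=\llbracket\mathtt{info}_K\rrbracket^{\mathcal{M},X}$ and $\mathcal{M},w,X\vDash\mathtt{max}_K$; (3) for every $L\subseteq I$, if $\mathcal{M},w,X\vDash\mathtt{max}_L$ then $\llbracket\mathtt{info}_L\rrbracket^{\mathcal{M},X}$ is a maximal $\Theta$-subset of $X$.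
   Context: Formulas of the modal language $\mathcal{L}$: $\varphi::=p\mid\neg\varphi\mid(\varphi\wedge\varphi)\mid\Box\varphi$ with $\vee,\to$ as usual and $\Diamond\varphi:=\neg\Box\neg\varphi$; nonmodal formulas are those without $\Box$. A model is $\mathcal{M}=\langle W,V\rangle$, $W$ nonempty, $V(p)\subseteq W$. For $w\in W$, $X\subseteq W$: $\mathcal{M},w,X\vDash p$ iff $w\in V(p)$; $\neg,\wedge$ Boolean; $\mathcal{M},w,X\vDash\Box\varphi$ iff $\mathcal{M},v,X\vDash\varphi$ for all $v\in X$. $\llbracket\varphi\rrbracket^{\mathcal{M},Y}=\{v\in Y\mid\mathcal{M},v,Y\vDash\varphi\}$. Fix $\Theta=\bigvee_{i\in I}\theta_i$ with $I$ finite and $\theta_i=\varphi_i\wedge\Box\psi_i\wedge\bigwedge_{n\in D_i}\Diamond\chi_n$, where all $\varphi_i,\psi_i,\chi_n$ are nonmodal and each $D_i$ is a finite index set. For $K\subseteq I$: $\mathtt{info}_K:=(\bigvee_{k\in K}\varphi_k)\wedge\bigwedge_{k\in K}\psi_k$; $\mathtt{good}_K:=\bigwedge_{k\in K}\bigwedge_{n\in D_k}\Diamond(\mathtt{info}_K\wedge\chi_n)$; $\mathtt{max}_K:=\mathtt{good}_K\wedge\bigwedge_{L\subseteq I}\big((\Box(\mathtt{info}_K\to\mathtt{info}_L)\wedge\Diamond(\neg\mathtt{info}_K\wedge\mathtt{info}_L))\to\neg\mathtt{good}_L\big)$ (empty disjunction is $\bot$, empty conjunction is $\top$). A set $Y\subseteq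 X$ is a $\Theta$-subset of $X$ if $Y\subseteq\llbracket\Theta\rrbracket^{\mathcal{M},Y}$; it is a maximal $\Theta$-subset if no $\Theta$-subset $Z$ of $X$ satisfies $Y\subsetneq Z$. *)

(* Defs.v *)
From mathcomp Require Import all_boot.
Set Implicit Arguments. Unset Strict Implicit. Unset Printing Implicit Defensive.

Inductive form : Type :=
| Var : nat -> form
| Neg : form -> form
| And : form -> form -> form
| Box : form -> form.

Definition Or (a b : form) : form := Neg (And (Neg a) (Neg b)).
Definition Imp (a b : form) : form := Or (Neg a) b.
Definition Dia (a : form) : form := Neg (Box (Neg a)).
Definition Bot : form := And (Var 0) (Neg (Var 0)).
Definition Top : form := Neg Bot.

Definition BigAnd (s : seq form) : form := foldr And Top s.
Definition BigOr (s : seq form) : form := foldr Or Bot s.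

Fixpoint nonmodal (f : form) : Prop :=
  match f with
  | Var _ => True
  | Neg a => nonmodal a
  | And a b => nonmodal a /\ nonmodal b
  | Box _ => False
  end.

Fixpoint sat (W : Type) (V : nat -> W -> Prop) (w : W) (X : W -> Prop) (f : form) : Prop :=
  match f with
  | Var p => V p w
  | Neg a => ~ sat V w X a
  | And a b => sat V w X a /\ sat V w X b
  | Box a => forall v, X v -> sat V v X a
  end.

(* [[f]]^{M,Y} = { v in Y | M, v, Y |= f } *)
Definition ext (W : Type) (V : nat -> W -> Prop) (f : form) (Y : W -> Prop) : W -> Prop :=
  fun v => Y v /\ sat V v Y f.

Definition subset_of (W : Type) (A B : W -> Prop) : Prop := forall v, A v -> B v.
Definition set_equal (W : Type) (A B : W -> Prop) : Prop := forall v, A v <-> B v.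

Section Theta.
(* Theta = \/_{i in I} (phi_i /\ Box psi_i /\ /\_{n in D_i} Dia chi_n);
   the family (chi_n)_{n in D_i} is given as the finite list chi i. *)
Variables (I : finType) (phi psi : I -> form) (chi : I -> seq form).

Definition theta (i : I) : form :=
  And (phi i) (And (Box (psi i)) (BigAnd [seq Dia c | c <- chi i])).

Definition Theta : form := BigOr [seq theta i | i <- enum I].

Definition info (K : {set I}) : form :=
  And (BigOr [seq phi k | k <- enum K]) (BigAnd [seq psi k | k <- enum K]).

Definition good (K : {set I}) : form :=
  BigAnd [seq BigAnd [seq Dia (And (info K) c) | c <- chi k] | k <- enum K].

Definition maxf (K : {set I}) : form :=
  And (good K)
      (BigAnd [seq Imp (And (Box (Imp (info K) (info L)))
                            (Dia (And (Neg (info K)) (info L))))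
                       (Neg (good L)) | L <- enum {: {set I}}]).

Definition Theta_subset (W : Type) (V : nat -> W -> Prop) (X Y : W -> Prop) : Prop :=
  subset_of Y X /\ subset_of Y (ext V Theta Y).

Definition max_Theta_subset (W : Type) (V : nat -> W -> Prop) (X Y : W -> Prop) : Prop :=
  Theta_subset V X Y /\
  ~ (exists Z : W -> Prop, Theta_subset V X Z /\ subset_of Y Z /\ ~ subset_of Z Y).
End Theta.

(* membership in a list of formulas (Prop-valued, form has no eqType instance) *)
Fixpoint in_list (c : form) (s : seq form) : Prop :=
  match s with [::] => False | d :: s' => d = c \/ in_list c s' end.

(* Main.v *)
From Stdlib Require Import Classical ClassicalEpsilon.
Require Import Defs.
From mathcomp Require Import all_boot.

Definition decb (P : Prop) : bool :=
  if excluded_middle_informative P then true else false.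
Lemma decbP (P : Prop) : decb P = true <-> P.
Proof. rewrite /decb; case: excluded_middle_informative => //; tauto. Qed.

Lemma nm_sat (W : Type) (V : nat -> W -> Prop) (f : form) :
  nonmodal f -> forall v (X Y : W -> Prop), sat V v X f <-> sat V v Y f.
Proof.
elim: f => [n|a IH|a IHa b IHb|a IH] //= H v X Y.
- by rewrite (IH H v X Y).
- case: H => Ha Hb. by rewrite (IHa Ha v X Y) (IHb Hb v X Y).
Qed.

Arguments nm_sat {W V f}.
Lemma nmT (W : Type) (V : nat -> W -> Prop) f : nonmodal f ->
  forall v (X Y : W -> Prop), sat V v X f -> sat V v Y f.
Proof. by move=> H v X Y /(nm_sat H v X Y). Qed.
Arguments nmT {W V f}.

Lemma memIn (T : eqType) (x : T) s : x \in s <-> List.In x s.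
Proof.
elim: s => [|a s IH] //=. rewrite in_cons -IH.
split.
- by case/orP => [/eqP ->|]; auto.
- by case=> [<-|H]; [rewrite eqxx | rewrite H orbT].
Qed.

Lemma in_list_In c s : in_list c s <-> List.In c s.
Proof. elim: s => [|a s IH] //=; try by rewrite IH. Qed.

Lemma sat_BigAnd_map (T : Type) (g : T -> form) s (W : Type) V (w : W) X :
  sat V w X (BigAnd (map g s)) <-> forall x, List.In x s -> sat V w X (g x).
Proof.
elim: s => [|a s IH] /=; first by split => // _ [].
rewrite IH. split.
- by case=> H1 H2 x [<-|]; auto.
- by move=> H; split; auto.
Qed.

Lemma sat_Or (W : Type) V (w : W) X a b :
  sat V w X (Or a b) <-> sat V w X a \/ sat V w X b.
Proof. rewrite /=; tauto. Qed.

Lemma sat_BigOr_map (T : Type) (g : T -> form) s (W : Type) V (w : W) X :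
  sat V w X (BigOr (map g s)) <-> exists x, List.In x s /\ sat V w X (g x).
Proof.
elim: s => [|a s IH] /=.
- split; [tauto | by case=> x []].
- change (sat V w X (Or (g a) (BigOr [seq g i | i <- s])) <->
    (exists x : T, (a = x \/ List.In x s) /\ sat V w X (g x))).
  rewrite sat_Or IH. split.
  + case=> [H|[x [H1 H2]]]; [by exists a; auto | by exists x; auto].
  + case=> x [[<-|H1] H2]; [by left | by right; exists x].
Qed.

Lemma sat_Imp (W : Type) V (w : W) X a b :
  sat V w X (Imp a b) <-> (sat V w X a -> sat V w X b).
Proof. rewrite /=; tauto. Qed.

Lemma sat_Dia (W : Type) V (w : W) X a :
  sat V w X (Dia a) <-> exists v, X v /\ sat V v X a.
Proof.
rewrite /=. split.
- move=> H; apply: NNPP => H'; apply: H => v Xv Hv; apply: H'; by exists v.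
- by case=> v [Xv Hv] H; apply: (H v Xv).
Qed.

Section S.
Variables (I : finType) (phi psi : I -> form) (chi : I -> seq form)
  (Hphi : forall i, nonmodal (phi i)) (Hpsi : forall i, nonmodal (psi i))
  (Hchi : forall i c, in_list c (chi i) -> nonmodal c)
  (W : Type) (V : nat -> W -> Prop).

Lemma sat_info v Y K : sat V v Y (info phi psi K) <->
  (exists k, k \in K /\ sat V v Y (phi k)) /\ (forall k, k \in K -> sat V v Y (psi k)).
Proof.
rewrite /info /=. rewrite sat_BigOr_map sat_BigAnd_map.
split.
- case=> [[k [Hk H1]] H2]; split; first by exists k; rewrite -mem_enum memIn.
  by move=> k' Hk'; apply: H2; rewrite -memIn mem_enum.
- case=> [[k [Hk H1]] H2]; split; first by exists k; rewrite -memIn mem_enum.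
  by move=> k' Hk'; apply: H2; rewrite -mem_enum memIn.
Qed.

Lemma nm_info K : nonmodal (info phi psi K).
Proof.
rewrite /info /=; split.
- elim: (enum K) => [|a s IH] //=.
- elim: (enum K) => [|a s IH] //=.
Qed.

Lemma sat_good w X K : sat V w X (good phi psi chi K) <->
  forall k c, k \in K -> List.In c (chi k) ->
    exists u, X u /\ sat V u X (info phi psi K) /\ sat V u X c.
Proof.
rewrite /good sat_BigAnd_map. split.
- move=> H k c Hk Hc. have := H k; rewrite -memIn mem_enum => /(_ Hk).
  rewrite sat_BigAnd_map => /(_ c Hc). rewrite sat_Dia.
  by case=> u [Xu [H1 H2]]; exists u.
- move=> H k; rewrite -memIn mem_enum => Hk. rewrite sat_BigAnd_map => c Hc.
  rewrite sat_Dia. case: (H k c Hk Hc) => u [Xu [H1 H2]]; exists u; by split.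
Qed.

Lemma sat_theta v Y i : sat V v Y (theta phi psi chi i) <->
  sat V v Y (phi i) /\ (forall u, Y u -> sat V u Y (psi i)) /\
    sat V v Y (BigAnd [seq Dia c | c <- chi i]).
Proof. by []. Qed.

Lemma sat_Theta v Y : sat V v Y (Theta phi psi chi) <->
  exists i, sat V v Y (phi i) /\ (forall u, Y u -> sat V u Y (psi i)) /\
    (forall c, List.In c (chi i) -> exists u, Y u /\ sat V u Y c).
Proof.
rewrite /Theta sat_BigOr_map. split.
- case=> i [_ /sat_theta [H1 [H2 H3]]]; exists i; split => //; split => //.
  move=> c Hc. move: H3; rewrite (@sat_BigAnd_map _ Dia) => /(_ c Hc). by rewrite sat_Dia.
- case=> i [H1 [H2 H3]]; exists i; split; first by rewrite -memIn mem_enum.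
  apply/sat_theta.
  split => //; split => //. rewrite (@sat_BigAnd_map _ Dia) => c Hc. rewrite sat_Dia. exact: H3.
Qed.

Lemma maxf_item w X a b g : sat V w X (Imp (And (Box (Imp a b)) (Dia (And (Neg a) b))) (Neg g)) <->
  ((forall u, X u -> sat V u X a -> sat V u X b) ->
   (exists u, X u /\ ~ sat V u X a /\ sat V u X b) -> ~ sat V w X g).
Proof.
rewrite sat_Imp. split.
- move=> H H1 H2; apply: H; split.
  + move=> u Xu; apply/sat_Imp; exact: H1 u Xu.
  + by apply/sat_Dia.
- move=> H [H1 H2]; apply: H.
  + move=> u Xu; exact: (proj1 (sat_Imp _ _ _ _ _ _) (H1 u Xu)).
  + have [u Hu] := (proj1 (sat_Dia W V w X (And (Neg a) b)) H2). by exists u.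
Qed.

Lemma maxf_eq w X K : sat V w X (maxf phi psi chi K) <-> sat V w X (good phi psi chi K) /\
  sat V w X (BigAnd [seq Imp (And (Box (Imp (info phi psi K) (info phi psi L)))
    (Dia (And (Neg (info phi psi K)) (info phi psi L)))) (Neg (good phi psi chi L))
   | L <- enum {: {set I}}]).
Proof. by []. Qed.

Lemma sat_maxf w X K : sat V w X (maxf phi psi chi K) <->
  sat V w X (good phi psi chi K) /\
  forall L, (forall u, X u -> sat V u X (info phi psi K) -> sat V u X (info phi psi L)) ->
    (exists u, X u /\ ~ sat V u X (info phi psi K) /\ sat V u X (info phi psi L)) ->
    ~ sat V w X (good phi psi chi L).
Proof.
rewrite maxf_eq.
rewrite sat_BigAnd_map. split.
- case=> Hg H; split => // L.
  have := H L; rewrite -memIn mem_enum => /(_ isT). by rewrite maxf_item.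
- case=> Hg H; split => // L _. rewrite maxf_item. exact: H.
Qed.

Definition Zof X K := ext V (info phi psi K) X.

Lemma part1 w X L : sat V w X (good phi psi chi L) ->
  Theta_subset phi psi chi V X (Zof X L).
Proof.
move=> /sat_good Hg. split; first by move=> v [].
move=> v [Xv Hi]; split; first by split.
have [[k [Hk Hp]] _] := (proj1 (sat_info v X L) Hi).
apply/sat_Theta; exists k; split; first exact: nmT (Hphi k) _ _ _ Hp.
split.
- move=> u [Xu Hu]. have [_ H] := (proj1 (sat_info u X L) Hu).
  exact: nmT (Hpsi k) _ _ _ (H k Hk).
- move=> c Hc. have [u [Xu [H1 H2]]] := Hg k c Hk Hc.
  exists u; split; first by split.
  exact: nmT (Hchi _ _ (proj2 (in_list_In _ _) Hc)) _ _ _ H2.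
Qed.

Lemma Kof w X Z : Theta_subset phi psi chi V X Z ->
  exists K, subset_of Z (Zof X K) /\ sat V w X (good phi psi chi K).
Proof.
move=> [ZX ZT].
pose P k := (forall u, Z u -> sat V u X (psi k)) /\
  (forall c, List.In c (chi k) -> exists u, Z u /\ sat V u X c).
pose K := [set k | decb (P k)].
have inK k : k \in K <-> P k by rewrite inE; exact: decbP.
have a : subset_of Z (Zof X K).
  move=> v Zv; split; first exact: ZX.
  apply/sat_info; split.
  - have [_ /sat_Theta [i [H1 [H2 H3]]]] := ZT v Zv.
    exists i; split; last exact: nmT (Hphi i) _ _ _ H1.
    apply/inK; split.
    + by move=> u Zu; exact: nmT (Hpsi i) _ _ _ (H2 u Zu).
    + move=> c Hc; have [u [Zu Hu]] := H3 c Hc; exists u; split => //.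
      exact: nmT (Hchi _ _ (proj2 (in_list_In _ _) Hc)) _ _ _ Hu.
  - by move=> k /inK [H _]; apply: H.
exists K; split => //. apply/sat_good => k c /inK [_ H] Hc.
have [u [Zu Hu]] := H c Hc. exists u; split; first exact: ZX.
split => //. by case: (a u Zu).
Qed.

End S.

Theorem lemma13 (I : finType) (phi psi : I -> form) (chi : I -> seq form)
  (Hphi : forall i, nonmodal (phi i)) (Hpsi : forall i, nonmodal (psi i))
  (Hchi : forall i c, in_list c (chi i) -> nonmodal c)
  (W : Type) (V : nat -> W -> Prop) (w : W) (X : W -> Prop) :
  (forall L : {set I}, sat V w X (good phi psi chi L) ->
      Theta_subset phi psi chi V X (ext V (info phi psi L) X)) /\
  (forall Y : W -> Prop, max_Theta_subset phi psi chi V X Y ->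
      exists K : {set I}, set_equal Y (ext V (info phi psi K) X) /\
                          sat V w X (maxf phi psi chi K)) /\
  (forall L : {set I}, sat V w X (maxf phi psi chi L) ->
      max_Theta_subset phi psi chi V X (ext V (info phi psi L) X)).
Proof.
split; first by move=> L; apply: (@part1 _ _ _ _ Hphi Hpsi Hchi).
split.
- move=> Y [HY Hmax].
  have [K [a b]] := @Kof _ _ _ _ Hphi Hpsi Hchi _ _ w _ _ HY.
  have ZK := @part1 _ _ _ _ Hphi Hpsi Hchi _ _ _ _ _ b.
  have eqY : set_equal Y (ext V (info phi psi K) X).
    move=> v; split; first exact: a.
    move=> Hv; apply: NNPP => nY; apply: Hmax.
    exists (ext V (info phi psi K) X); split => //; split => //.
    by move=> H; apply: nY; apply: H.
  exists K; split => //. apply/sat_maxf; split => // L H1 [u [Xu [nK HL]]] gL.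
  apply: Hmax. exists (ext V (info phi psi L) X); split; first exact: (@part1 _ _ _ _ Hphi Hpsi Hchi _ _ _ _ _ gL).
  split.
  + move=> v Yv; have [Xv Hv] := a v Yv; split => //; exact: H1.
  + move=> H. have := H u (conj Xu HL) => /a [_ //].
- move=> L /sat_maxf [gL H]. split; first exact: (@part1 _ _ _ _ Hphi Hpsi Hchi _ _ _ _ _ gL).
  case=> Z [HZ [sub nsub]].
  have [K [a b]] := @Kof _ _ _ _ Hphi Hpsi Hchi _ _ w _ _ HZ.
  apply: (H K) => //.
  + move=> u Xu Hu; have := a u (sub u (conj Xu Hu)); by case.
  + apply: NNPP => nE; apply: nsub => u Zu; apply: NNPP => nL.
    apply: nE; exists u; have [Xu Hu] := a u Zu; split => //; split => //.
    by move=> HL; apply: nL; split.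
Qed.
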